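(* Let $q$ be a prime power and $L\subset\mathbb{P}^2$ a line defined over $\mathbb{F}_q$. Let $\mathcal{T}_L$ be the set of non-constant homogeneous $f\in\mathbb{F}_q[x,y,z]$ such that the curve $C=\{f=0\}$ is not transverse to $L$. Then $\mu_d(\mathcal{T}_L)=q^{-1}+q^{-2}-q^{-3}$ for all $d\ge 3$. In particular $\mu(\mathcal{T}_L)=q^{-1}+q^{-2}-q^{-3}$.
   Context: Let $R=\mathbb{F}_q[x,y,z]$, $R_d$ the homogeneous polynomials of degree $d$ (including $0$), $\mu_d(\mathcal{A})=\#(\mathcal{A}\cap R_d)/\#R_d$ and $\mu(\mathcal{A})=\lim_{d\to\infty}\mu_d(\mathcal{A})$. For $f\in R_d$, $C=\{f=0\}$ is not transverse to $L$ if the restriction of $f$ to $L$ (a binary form of degree $d$ after choosing coordinates on $L\cong\mathbb{P}^1$) has a repeated root over $\overline{\mathbb{F}}_q$ or is identically zero; equivalently, $L$ does not meet $C$ in $d$ distinct points (it is tangent to $C$, passes through a singular point of $C$, or is contained in $C$). *)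

(* Defs.v *)
From HB Require Import structures.
From Stdlib Require Import ClassicalEpsilon.
From mathcomp Require Import all_boot all_order all_algebra all_field.
From mathcomp Require Import mpoly.

Set Implicit Arguments.
Unset Strict Implicit.
Unset Printing Implicit Defensive.

Import Order.TTheory GRing.Theory Num.Theory.
Local Open Scope ring_scope.

Definition pbool (P : Prop) : bool :=
  if excluded_middle_informative P then true else false.

Section Defs.
Variable F : finFieldType.

Definition Fbar : closedFieldType :=
  projT1 (countable_algebraic_closure F).
Definition toFbar : {rmorphism F -> Fbar} :=
  sval (projT2 (countable_algebraic_closure F)).

Definition mon3 (d : nat) := {m : 'X_{1..3 < d.+1} | mdeg m == d}.

(* R_d: homogeneous polynomials of degree d (including 0), encoded by their
   coefficient vectors on the degree-d monomials. *)
Definition Rd (d : nat) := {ffun mon3 d -> F}.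

Definition poly_of (d : nat) (c : Rd d) : {mpoly F[3]} :=
  \sum_(m : mon3 d) c m *: 'X_[val (val m)].

(* The line L spanned by the F-rational points P, Q is parametrized by
   [s : t] |-> s P + t Q; the restriction of f to L is the binary form
   f(s P + t Q) in the variables s = 'X_0, t = 'X_1. *)
Definition restrict (P Q : 'rV[F]_3) (f : {mpoly F[3]}) : {mpoly F[2]} :=
  comp_mpoly [tuple (P ord0 i *: 'X_0 + Q ord0 i *: 'X_1 : {mpoly F[2]}) | i < 3] f.

(* A binary form g over \bar F has a repeated root [a : b] in P^1(\bar F):
   (b s - a t)^2 divides g. *)
Definition has_repeated_root (g : {mpoly Fbar[2]}) : Prop :=
  exists a b : Fbar, (a, b) != (0, 0) /\
    exists h : {mpoly Fbar[2]}, g = (b *: 'X_0 - a *: 'X_1) ^+ 2 * h.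

Definition not_transverse (P Q : 'rV[F]_3) (f : {mpoly F[3]}) : Prop :=
  restrict P Q f = 0 \/ has_repeated_root (map_mpoly toFbar (restrict P Q f)).

Definition mu_d (P Q : 'rV[F]_3) (d : nat) : rat :=
  (#|[set c : Rd d | pbool (not_transverse P Q (poly_of c))]|%:R
    / #|{: Rd d}|%:R).

End Defs.

Definition rat_cvg (u : nat -> rat) (l : rat) : Prop :=
  forall eps : rat, 0 < eps -> exists N : nat, forall d, (N <= d)%N -> `|u d - l| < eps.

(* Main.v *)
Set Warnings "-notation-overridden,-ambiguous-paths,-notation-incompatible-prefix,-deprecated".
Require Import Defs.
From HB Require Import structures.
From Stdlib Require Import ClassicalEpsilon Classical_Prop.
From mathcomp Require Import all_boot all_order all_algebra all_field.
From mathcomp Require Import mpoly.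
From mathcomp Require Import zify ring.
Import Order.TTheory GRing.Theory Num.Theory.
Local Open Scope ring_scope.
Section Part1.
Variable F : finFieldType.
Local Notation Fb := (Fbar F).
Local Notation iota := (toFbar F).

Lemma frob_poly_comp (p : nat) (hp : p \in [pchar F]) (h : {poly F}) :
  h ^+ p = (map_poly (pFrobenius_aut hp) h) \Po 'X^p.
Proof.
have hp' : p \in [pchar {poly F}] by rewrite pchar_poly.
rewrite -[h]coefK poly_def.
rewrite -(pFrobenius_autE hp') rmorph_sum /=.
rewrite rmorph_sum /= linear_sum /=.
apply: eq_bigr => i _.
rewrite pFrobenius_autE exprZn map_polyZ /= map_polyXn linearZ /= comp_Xn_poly.
by rewrite pFrobenius_autE exprAC.
Qed.

Lemma perf_deriv (u : {poly F}) : (1 < size u)%N -> u^`() = 0 ->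
  exists h : {poly F}, size h != 1%N /\ h ^+ 2 %| u.
Proof.
move=> su du.
case: (finPcharP F) => p pr hp.
have finj : injective (pFrobenius_aut hp) by apply: fmorph_inj.
have [r rK Kr] := injF_bij finj.
have r0 : r 0 = 0 by apply: finj; rewrite Kr rmorph0.
pose v : {poly F} := \poly_(j < size u) u`_(j * p).
have p0 : (0 < p)%N by rewrite prime_gt0.
have uv : u = v \Po 'X^p.
  apply/polyP => i; rewrite coef_comp_poly_Xn //.
  case: ifP => [pi | npi].
    rewrite coef_poly divnK //.
    case: ifP => // /negbT; rewrite -leqNgt => le.
    move/leq_sizeP: (leqnn (size u)) => H; rewrite H //.
    apply: leq_trans le _; exact: leq_div.
  case: i npi => [|k] npi; first by rewrite dvdn0 in npi.
  have : u^`()`_k = 0 by rewrite du coef0.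
  rewrite coef_deriv -mulr_natr => /eqP; rewrite mulf_eq0 => /orP[/eqP //|].
  by rewrite -(dvdn_pcharf hp) npi.
pose h := map_poly r v.
have hv : map_poly (pFrobenius_aut hp) h = v.
  apply/polyP => i; rewrite coef_map_id0 ?rmorph0 // coef_map_id0 //.
exists h.
have uh : u = h ^+ p by rewrite frob_poly_comp hv.
split.
  apply/negP => /eqP sh.
  have := size_exp h p; rewrite -uh sh /= mul0n.
  by move: su; case: (size u) => [|[|]].
by rewrite uh dvdp_exp2l // prime_gt1.
Qed.

Definition sqF (p : {poly F}) := forall u : {poly F}, size u != 1%N -> ~~ (u ^+ 2 %| p).
Definition NS (p : {poly F}) := exists a : Fb, ('X - a%:P) ^+ 2 %| map_poly iota p.

Lemma sqF_sep p : sqF p -> separable_poly p.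
Proof.
move=> sq; apply/separable_polyP; split.
  exact: (poly_square_freeP p).2.
move=> u up su; apply/negP => /eqP du.
have [h [sh hu]] := perf_deriv u su du.
by move: (sq h sh); rewrite (dvdp_trans hu up).
Qed.

Lemma sqF_NS p : sqF p <-> ~ NS p.
Proof.
split.
  move=> /sqF_sep sp [a].
  rewrite separable_nosquare // ?size_XsubC //.
  by rewrite separable_map.
move=> nns u su; apply/negP => hu; apply: nns.
have : size (map_poly iota u) != 1%N by rewrite size_map_poly.
case/closed_rootP => a ra; exists a.
apply: dvdp_trans (_ : map_poly iota u ^+ 2 %| _).
  by apply: dvdp_exp2r; rewrite dvdp_XsubCl.
by rewrite -rmorphXn dvdp_map.
Qed.

Lemma sqF_neq0 p : sqF p -> p != 0.
Proof. by move=> sq; apply/eqP => p0; move: (sq 0); rewrite p0 size_poly0 dvdp0 => /(_ isT). Qed.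

Lemma sqFZ c p : c != 0 -> sqF p -> sqF (c *: p).
Proof. by move=> c0 sq u su; rewrite dvdpZr //; apply: sq. Qed.

Lemma decomp_ex p : p != 0 -> exists a b, [/\ a \is monic, sqF b & p = a ^+ 2 * b].
Proof.
move: {2}(size p) (leqnn (size p)) => n; elim: n p => [|n IH] p sp p0.
  by move: sp; rewrite leqn0 size_poly_eq0 (negbTE p0).
case: (Classical_Prop.classic (sqF p)) => sq.
  by exists 1, p; split; rewrite ?monic1 ?expr1n ?mul1r.
have [u [su hu]] : exists u : {poly F}, size u != 1%N /\ u ^+ 2 %| p.
  apply: Classical_Prop.NNPP => H; apply: sq => u su; apply/negP => hu.
  by apply: H; exists u.
have u0 : u != 0.
  by apply/eqP => u0; move: hu; rewrite u0 expr0n /= dvd0p (negbTE p0).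
have u2 : (1 < size u)%N.
  by move: su; rewrite ltn_neqAle eq_sym => ->; rewrite size_poly_gt0.
case/dvdpP: hu => p1 ep.
have p10 : p1 != 0 by apply: contraNneq p0 => p10; rewrite ep p10 mul0r.
have u20 : u ^+ 2 != 0 by rewrite expf_neq0.
have sp1 : (size p1 <= n)%N.
  have : size p = (size p1 + size (u ^+ 2)).-1 by rewrite ep size_mul.
  have := size_exp u 2.
  move=> e2 e1.
  have hs : (size (u ^+ 2) > 0)%N by rewrite size_poly_gt0.
  move: e1 e2 hs sp u2; set A := size (u ^+ 2); set B := size u; set C := size p; set D := size p1. clear. move=> e1 e2 hs sp u2. lia.
have [a1 [b1 [ma1 sb1 e1]]] := IH p1 sp1 p10.
set c := lead_coef u.
have c0 : c != 0 by rewrite lead_coef_eq0.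
have [um mum uu] : exists2 um, um \is monic & u = c *: um.
  exists (c^-1 *: u); first by rewrite monicE lead_coefZ mulVf.
  by rewrite scalerA divff // scale1r.
exists (a1 * um), (c ^+ 2 *: b1); split.
- by rewrite monicMl.
- by apply: sqFZ; rewrite ?expf_neq0.
rewrite ep e1 uu exprZn -!scalerAr.
congr (_ *: _); rewrite exprMn; ring.
Qed.

Lemma decomp_dvd (a b a' b' : {poly F}) : a != 0 -> sqF b' ->
  a ^+ 2 * b = a' ^+ 2 * b' -> a %| a'.
Proof.
move=> a0 sb' e.
set g := gcdp a a'.
have g0 : g != 0 by rewrite gcdp_eq0 negb_and a0.
have ea : a = (a %/ g) * g by rewrite divpK // dvdp_gcdl.
have ea' : a' = (a' %/ g) * g by rewrite divpK // dvdp_gcdr.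
have cop : coprimep (a %/ g) (a' %/ g) by apply: coprimep_div_gcd; rewrite a0.
move: (a %/ g) (a' %/ g) ea ea' cop => u u' ea ea' cop.
have e2 : (u ^+ 2 * b) * g ^+ 2 = (u' ^+ 2 * b') * g ^+ 2.
  by move: e; rewrite ea ea' !exprMn; move=> e; rewrite -[LHS]mulrA [b * _]mulrC mulrA e; ring.
have e3 := mulIf (expf_neq0 2 g0) e2.
have hu : u ^+ 2 %| b'.
  have : u ^+ 2 %| b' * u' ^+ 2 by rewrite mulrC -e3 dvdp_mulr.
  by rewrite Gauss_dvdpl // coprimep_expl // coprimep_expr.
have : size u == 1%N by apply: contraLR hu => /sb'.
case/size_poly1P => c c0 uc.
rewrite ea uc mul_polyC dvdpZl //; exact: dvdp_gcdr.
Qed.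

Lemma decomp_uniq (a b a' b' : {poly F}) : a \is monic -> a' \is monic -> sqF b -> sqF b' ->
  a ^+ 2 * b = a' ^+ 2 * b' -> a = a' /\ b = b'.
Proof.
move=> ma ma' sb sb' e.
have aa : a = a'.
  apply/eqP; rewrite -eqp_monic //; apply/andP; split.
    exact: decomp_dvd (monic_neq0 ma) sb' e.
  exact: decomp_dvd (monic_neq0 ma') sb (esym e).
split => //; move: e; rewrite aa; apply: mulfI.
by rewrite expf_neq0 // monic_neq0.
Qed.
End Part1.
Arguments sqF {F}. Arguments NS {F}. Arguments decomp_ex {F p}. Arguments decomp_uniq {F a b a' b'}.
Arguments sqF_NS {F}. Arguments sqF_neq0 {F p}. Arguments sqFZ {F}.
Section Part2.
Variable F : finFieldType.

Lemma size_rVpoly N (v : 'rV[F]_N) : (size (rVpoly v) <= N)%N.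
Proof. exact: size_poly. Qed.

Lemma card_le N s : (s <= N)%N ->
  #|[set w : 'rV[F]_N | (size (rVpoly w) <= s)%N]| = (#|F| ^ s)%N.
Proof.
move=> sN.
pose E (v : 'rV[F]_s) : 'rV[F]_N := poly_rV (rVpoly v).
have Einj : injective E.
  move=> v v' /(congr1 rVpoly); rewrite /E !poly_rV_K; first exact: (can_inj rVpolyK).
  - exact: leq_trans (size_rVpoly _ _) sN.
  - exact: leq_trans (size_rVpoly _ _) sN.
transitivity #|E @: setT|; last by rewrite card_imset // cardsT card_mx mul1n.
  apply: eq_card => w; rewrite inE; apply/idP/imsetP.
    move=> sw; exists (poly_rV (rVpoly w)); rewrite ?inE //.
    by rewrite /E poly_rV_K // rVpolyK.
  case=> v _ ->; rewrite /E poly_rV_K; first exact: size_rVpoly.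
  exact: leq_trans (size_rVpoly _ _) sN.
Qed.

Lemma card_eq N s : (0 < s)%N -> (s <= N)%N ->
  #|[set w : 'rV[F]_N | size (rVpoly w) == s]| = (#|F| ^ s - #|F| ^ s.-1)%N.
Proof.
move=> s0 sN.
have h := cardsID [set w : 'rV[F]_N | (size (rVpoly w) <= s.-1)%N] [set w : 'rV[F]_N | (size (rVpoly w) <= s)%N].
rewrite (card_le _ _ sN) in h.
have -> : [set w : 'rV[F]_N | size (rVpoly w) == s] =
   [set w : 'rV[F]_N | (size (rVpoly w) <= s)%N] :\: [set w : 'rV[F]_N | (size (rVpoly w) <= s.-1)%N].
  apply/setP => w; rewrite !inE.
  move: (size (rVpoly w)) => k; case: s s0 {sN h} => // s _ /=.
  by rewrite -ltnNge andbC -eqn_leq.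
have e2 : [set w : 'rV[F]_N | (size (rVpoly w) <= s)%N] :&: [set w : 'rV[F]_N | (size (rVpoly w) <= s.-1)%N] = [set w : 'rV[F]_N | (size (rVpoly w) <= s.-1)%N].
  apply/setP => w; rewrite !inE; apply/andP/idP => [[] //|h']; split => //.
  by apply: leq_trans h' (leq_pred _).
rewrite e2 (card_le _ _ (leq_trans (leq_pred s) sN)) in h.
by rewrite -h addKn.
Qed.

End Part2.
Arguments size_rVpoly {F N}. Arguments card_le {F}. Arguments card_eq {F}.
Lemma pboolP (P : Prop) : pbool P = true <-> P.
Proof. by rewrite /pbool; case: excluded_middle_informative. Qed.

Section Part3.
Variable F : finFieldType.

Lemma dec_ex (p : {poly F}) : exists x : {poly F} * {poly F},
  p != 0 -> [/\ x.1 \is monic, sqF x.2 & p = x.1 ^+ 2 * x.2].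
Proof.
case: (eqVneq p 0) => [->|p0]; first by exists (0, 0).
by have [a [b h]] := decomp_ex p0; exists (a, b).
Qed.

Definition dec (p : {poly F}) : {poly F} * {poly F} :=
  proj1_sig (constructive_indefinite_description _ (dec_ex p)).

Lemma decP p : p != 0 -> [/\ (dec p).1 \is monic, sqF (dec p).2 & p = (dec p).1 ^+ 2 * (dec p).2].
Proof. rewrite /dec; case: constructive_indefinite_description => x hx /=; exact: hx. Qed.

Lemma monicMXaddC (a : {poly F}) c : a \is monic -> a * 'X + c%:P \is monic.
Proof.
move=> ma; have a0 := monic_neq0 ma.
rewrite monicE lead_coefDl ?lead_coefMX -?monicE // size_mulX //.
by apply: leq_ltn_trans (size_polyC_leq1 c) _; rewrite ltnS size_poly_gt0.
Qed.

Lemma size_MXaddC_nz (a : {poly F}) c : a != 0 -> size (a * 'X + c%:P) = (size a).+1.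
Proof. by move=> a0; rewrite size_MXaddC (negbTE a0). Qed.

Lemma size_sqM (A b : {poly F}) : A \is monic -> b != 0 ->
  size (A ^+ 2 * b) = ((size A).-1 * 2 + size b)%N.
Proof.
move=> mA b0; rewrite size_monicM ?monic_exp //.
have := size_exp A 2; have : (0 < size (A ^+ 2))%N by rewrite size_poly_gt0 monic_neq0 ?monic_exp.
move: (size (A ^+ 2)) => k; case: k => // k _ /= <-.
lia.
Qed.

Lemma NS_sq (A b : {poly F}) : size A != 1%N -> NS (A ^+ 2 * b).
Proof.
move=> sA; apply: NNPP => nn; have := (sqF_NS (A ^+ 2 * b)).2 nn A sA.
by rewrite dvdp_mulr.
Qed.

Lemma card_NS N s : (0 < s)%N -> (s.+2 <= N)%N ->
  #|[set w : 'rV[F]_N | (size (rVpoly w) == s.+2) && pbool (NS (rVpoly w))]| =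
  (#|F| * #|[set w : 'rV[F]_N | size (rVpoly w) == s]|)%N.
Proof.
move=> s0 sN.
pose Psi (x : F * 'rV[F]_N) : 'rV[F]_N :=
  poly_rV ((((dec (rVpoly x.2)).1 * 'X + x.1%:P) ^+ 2) * (dec (rVpoly x.2)).2).
pose D := setX [set: F] [set w : 'rV[F]_N | size (rVpoly w) == s].
have key : forall x, x \in D -> [/\ rVpoly x.2 != 0,
     rVpoly (Psi x) = ((dec (rVpoly x.2)).1 * 'X + x.1%:P) ^+ 2 * (dec (rVpoly x.2)).2 &
     size (rVpoly (Psi x)) = s.+2].
  case=> c w; rewrite in_setX !inE /= => /eqP sw.
  have w0 : rVpoly w != 0 by rewrite -size_poly_eq0 sw -lt0n.
  have [ma sb e] := decP _ w0.
  have a0 := monic_neq0 ma; have b0 := sqF_neq0 sb.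
  have sw' : ((size (dec (rVpoly w)).1).-1 * 2 + size (dec (rVpoly w)).2)%N = s.
    by rewrite -sw [in RHS]e size_sqM.
  have hs : size (((dec (rVpoly w)).1 * 'X + c%:P) ^+ 2 * (dec (rVpoly w)).2) = s.+2.
    rewrite size_sqM ?monicMXaddC // size_MXaddC_nz //.
    have : (0 < size (dec (rVpoly w)).1)%N by rewrite size_poly_gt0.
    move: sw'; move: (size _) (size _) => k l. lia.
  by split => //; rewrite /Psi poly_rV_K // hs.
rewrite -[#|F|]cardsT -cardsX -/D.
rewrite -(card_in_imset (f := Psi)); last first.
  move=> x y xD yD; have [x0 ex sx] := key x xD; have [y0 ey sy] := key y yD.
  move=> /(congr1 rVpoly); rewrite ex ey.
  have [mx sbx _] := decP _ x0; have [my sby _] := decP _ y0.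
  case/decomp_uniq; rewrite ?monicMXaddC //.
  move=> eA eB.
  have ec : x.1 = y.1.
    have := congr1 (fun q : {poly F} => q`_0) eA.
    by rewrite /= !coefD !coefMX !coefC /= !add0r.
  have ea : (dec (rVpoly x.2)).1 = (dec (rVpoly y.2)).1.
    by move: eA; rewrite ec => /addIr /mulIf; apply; rewrite polyX_eq0.
  have e2 : x.2 = y.2.
    apply: (can_inj rVpolyK).
    have [_ _ ->] := decP _ x0; have [_ _ ->] := decP _ y0.
    by rewrite ea eB.
  by case: x y ec e2 {xD yD x0 ex sx y0 ey sy mx sbx my sby eA eB ea} => ? ? [? ?] /= -> ->.
apply: eq_card => w; rewrite inE; apply/idP/imsetP.
- case/andP => /eqP sw /pboolP nsw.
  have w0 : rVpoly w != 0 by rewrite -size_poly_eq0 sw.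
  have [ma sb e] := decP _ w0.
  move: (dec (rVpoly w)) ma sb e => [A B] /= ma sb e.
  have sA : size A != 1%N.
    apply/negP => /eqP sA; apply: (sqF_NS (rVpoly w)).1 nsw.
    have A1 : A = 1.
      apply/eqP; rewrite -eqp_monic ?monic1 //.
      by rewrite eqp_sym -dvdp_size_eqp ?dvd1p // size_poly1 sA.
    by rewrite e A1 expr1n mul1r.
  have sA2 : (1 < size A)%N by rewrite ltn_neqAle eq_sym sA size_poly_gt0 monic_neq0.
  have eA := poly_take_drop 1 A.
  set a := drop_poly 1 A in eA; set c := A`_0.
  have tA : take_poly 1 A = c%:P.
    apply/polyP => i; rewrite coef_take_poly coefC; case: i => //.
  rewrite tA expr1 addrC in eA.
  have a0 : a != 0.
    apply: contraTneq sA2 => a0; rewrite -eA a0 mul0r add0r -leqNgt.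
    exact: size_polyC_leq1.
  have ma' : a \is monic.
    by move: ma; rewrite -eA !monicE lead_coefDl ?lead_coefMX // size_mulX //; apply: leq_ltn_trans (size_polyC_leq1 c) _; rewrite ltnS size_poly_gt0.
  have b0 := sqF_neq0 sb.
  have sa : (0 < size a)%N by rewrite size_poly_gt0.
  have sm : (size (a ^+ 2 * B)%R <= N)%N.
    move: sw; rewrite e -eA size_sqM ?monicMXaddC // size_MXaddC_nz // size_sqM //.
    move=> h; apply: leq_trans sN; lia.
  exists (c, poly_rV (a ^+ 2 * B)).
    rewrite in_setX !inE /= poly_rV_K //.
    move: sw; rewrite e -eA size_sqM ?monicMXaddC // size_MXaddC_nz // size_sqM //.
    move=> h; apply/eqP; lia.
  rewrite /Psi /= poly_rV_K //.
  have m0 : a ^+ 2 * B != 0 by rewrite mulf_neq0 ?expf_neq0.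
  have [md sd ed] := decP _ m0.
  case: (decomp_uniq md ma' sd sb (esym ed)) => -> ->.
  by rewrite eA -e rVpolyK.
- case=> x xD ->; have [x0 ex sx] := key x xD.
  rewrite sx eqxx /=; apply/pboolP; rewrite ex.
  apply: NS_sq.
  have [mx _ _] := decP _ x0.
  by rewrite size_MXaddC_nz ?monic_neq0 // eqSS size_poly_eq0 monic_neq0.
Qed.

End Part3.
Arguments card_NS {F}. Arguments dec {F}.
Section Part4.
Variable F : finFieldType.

Lemma card_bad e :
  #|[set w : 'rV[F]_(e.+4) | (size (rVpoly w) <= e.+2)%N || pbool (NS (rVpoly w))]| =
  (#|F| ^ e.+2 + #|F| * (#|F| ^ e.+1 - #|F| ^ e) + #|F| * (#|F| ^ e.+2 - #|F| ^ e.+1))%N.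
Proof.
set B := [set w : 'rV[F]_(e.+4) | _].
set S := [set w : 'rV[F]_(e.+4) | (size (rVpoly w) <= e.+2)%N].
set T1 := [set w : 'rV[F]_(e.+4) | size (rVpoly w) == e.+3].
have h1 := cardsID S B.
have h2 := cardsID T1 (B :\: S).
have E1 : B :&: S = S.
  apply/setP => w; rewrite !inE; case: (_ <= _)%N => //; by rewrite andbF.
have E2 : (B :\: S) :&: T1 = [set w : 'rV[F]_(e.+4) | (size (rVpoly w) == e.+1.+2) && pbool (NS (rVpoly w))].
  apply/setP => w; rewrite !inE; move: (size _) => k.
  case: (pbool _); case: leqP => ? ; case: eqP => ? //=; lia.
have E3 : (B :\: S) :\: T1 = [set w : 'rV[F]_(e.+4) | (size (rVpoly w) == e.+2.+2) && pbool (NS (rVpoly w))].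
  apply/setP => w; rewrite !inE; have := size_rVpoly w; move: (size _) => k sk.
  case: (pbool _); case: leqP => ? ; case: eqP => ? ; case: eqP => ? //=; lia.
rewrite E1 E2 E3 (card_le _ _ (_ : e.+2 <= e.+4)%N) // in h1 h2.
rewrite !card_NS ?card_eq // in h2.
rewrite -h1 -h2 addnA; first by [].
all: lia.
Qed.
End Part4.
Section Part5.
Variable R : comRingType.
Definition H (k : nat) (u : {poly R}) : {mpoly R[2]} :=
  \sum_(j < k.+1) u`_j *: ('X_0 ^+ j * 'X_1 ^+ (k - j)).
Lemma H_is_linear k : linear (H k).
Proof.
move=> c u v; rewrite /H scaler_sumr -big_split /=; apply: eq_bigr => j _.
by rewrite coefD coefZ scalerDl scalerA.
Qed.
HB.instance Definition _ k := GRing.isLinear.Build R {poly R} {mpoly R[2]} _ (H k) (H_is_linear k).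

Lemma HX k (v : {poly R}) : (size v <= k.+1)%N -> H k.+1 ('X * v) = 'X_0 * H k v.
Proof.
move=> sv; rewrite /H big_ord_recl coefXM /= scale0r add0r mulr_sumr.
apply: eq_bigr => j _; rewrite coefXM /= -scalerAr exprS /= subSS.
by congr (_ *: _); rewrite mulrA.
Qed.

Lemma H1 k (v : {poly R}) : (size v <= k.+1)%N -> H k.+1 v = 'X_1 * H k v.
Proof.
move=> sv; rewrite /H big_ord_recr /=.
have -> : v`_k.+1 = 0 by move/leq_sizeP: sv; apply.
rewrite scale0r addr0 mulr_sumr; apply: eq_bigr => j _.
rewrite -scalerAr /= subSn ?exprS; last by rewrite -ltnS.
by congr (_ *: _); rewrite mulrCA.
Qed.

Lemma HL k (c e : R) (v : {poly R}) : (size v <= k.+1)%N ->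
  H k.+1 ((c *: 'X + e%:P) * v) = (c *: 'X_0 + e *: 'X_1) * H k v.
Proof.
move=> sv; rewrite mulrDl -scalerAl mul_polyC linearD !linearZ /= HX // H1 //.
by rewrite mulrDl -!scalerAl.
Qed.

Lemma size_lin (c e : R) : (size (c *: 'X + e%:P)%R <= 2)%N.
Proof.
have h1 := size_polyD (c *: 'X) (e%:P); have h2 := size_scale_leq c ('X : {poly R}).
have h3 := size_polyC_leq1 e; rewrite size_polyX in h2.
move: h1 h2 h3; move: (size _) (size _) (size _) => x y z; lia.
Qed.

Lemma HP n k (c e : R) (v : {poly R}) : (size v <= k.+1)%N ->
  H (n + k) ((c *: 'X + e%:P) ^+ n * v) = (c *: 'X_0 + e *: 'X_1) ^+ n * H k v /\
  (size ((c *: 'X + e%:P) ^+ n * v)%R <= (n + k).+1)%N.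
Proof.
move=> sv; elim: n => [|n [IH1 IH2]]; first by rewrite !expr0 !mul1r add0n.
rewrite addSn exprS -mulrA HL // IH1 mulrA -exprS; split => //.
have hm := size_mul_leq (c *: 'X + e%:P) ((c *: 'X + e%:P) ^+ n * v).
have := size_lin c e; move: hm IH2; move: (size _) (size _) (size _) => x y z; lia.
Qed.

Lemma HPROD (I : Type) (r : seq I) (cf ef : I -> R) (mf : I -> nat) :
  H (\sum_(i <- r) mf i)%N (\prod_(i <- r) (cf i *: 'X + (ef i)%:P) ^+ mf i) =
  \prod_(i <- r) (cf i *: 'X_0 + ef i *: 'X_1) ^+ mf i /\
  (size (\prod_(i <- r) (cf i *: 'X + (ef i)%:P) ^+ mf i)%R <= (\sum_(i <- r) mf i).+1)%N.
Proof.
elim: r => [|i r [IH1 IH2]].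
  rewrite !big_nil; split; last by rewrite size_poly1.
  by rewrite /H big_ord_recl big_ord0 addr0 coef1 /= !expr0 mulr1 scale1r.
rewrite !big_cons; have [h1 h2] := HP (mf i) _ (cf i) (ef i) _ IH2.
by rewrite h1 IH1.
Qed.

Definition h1 (i : 'I_2) : {poly R} := if (i : nat) == 0%N then 'X else 1.
Definition h2 (i : 'I_2) : {poly R} := if (i : nat) == 0%N then 1 else 'X.
Local Notation ev1 := (mmap (@polyC R) h1).
Local Notation ev2 := (mmap (@polyC R) h2).

Lemma ev1X0 : ev1 'X_0 = 'X. Proof. by rewrite mmapX mmap1U. Qed.
Lemma ev1X1 : ev1 'X_1 = 1. Proof. by rewrite mmapX mmap1U. Qed.
Lemma ev2X0 : ev2 'X_0 = 1. Proof. by rewrite mmapX mmap1U. Qed.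
Lemma ev2X1 : ev2 'X_1 = 'X. Proof. by rewrite mmapX mmap1U. Qed.
Lemma evZ (h : 'I_2 -> {poly R}) (c : R) p : mmap (@polyC R) h (c *: p) = c *: mmap (@polyC R) h p.
Proof. by rewrite mmapZ mul_polyC. Qed.

Lemma ev1H k (u : {poly R}) : (size u <= k.+1)%N -> ev1 (H k u) = u.
Proof.
move=> su; rewrite /H rmorph_sum /=.
under eq_bigr do rewrite evZ rmorphM !rmorphXn /= ev1X0 ev1X1 expr1n mulr1.
rewrite -poly_def; apply/polyP => i; rewrite coef_poly.
case: ltnP => // hi; apply/esym; move/leq_sizeP: su; apply; exact: hi.
Qed.

Lemma ev2H k (u : {poly R}) : ev2 (H k u) = \sum_(j < k.+1) u`_j *: 'X^(k - j).
Proof.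
rewrite /H rmorph_sum /=; apply: eq_bigr => j _.
by rewrite evZ rmorphM !rmorphXn /= ev2X0 ev2X1 expr1n mul1r.
Qed.

Lemma coef_rev k (u : {poly R}) i : (i <= k)%N ->
  (\sum_(j < k.+1) u`_j *: 'X^(k - j))`_i = u`_(k - i).
Proof.
move=> ik; rewrite coef_sumMXn.
have ki : (k - i < k.+1)%N by rewrite ltnS leq_subr.
rewrite (big_pred1 (Ordinal ki)) // => j /=.
rewrite -val_eqE /=; have := ltn_ord j; move: (nat_of_ord j) => jj hj.
apply/eqP/eqP => h; lia.
Qed.

End Part5.
Arguments H {R}.
Arguments HP {R} n {k}. Arguments HL {R} k.
Section Part6.
Variable K : fieldType.
Local Notation ev1 := (mmap (@polyC K) (h1 K)).
Local Notation ev2 := (mmap (@polyC K) (h2 K)).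

Lemma hrr_iff k (u : {poly K}) : (size u <= k.+3)%N ->
  (exists a b : K, (a, b) != (0, 0) /\ exists h : {mpoly K[2]}, H k.+2 u = (b *: 'X_0 - a *: 'X_1) ^+ 2 * h)
  <-> ((size u <= k.+1)%N \/ exists al : K, ('X - al%:P) ^+ 2 %| u).
Proof.
move=> su; split.
- case=> a [b [ab [h e]]].
  case: (eqVneq b 0) => [b0|b0].
    have a0 : a != 0 by move: ab; rewrite b0 xpair_eqE eqxx andbT.
    left.
    have := congr1 ev2 e; rewrite ev2H rmorphM rmorphXn rmorphB /= !evZ ev2X0 ev2X1 b0 scale0r sub0r.
    rewrite sqrrN -mul_polyC exprMn -mulrA => e2.
    have c0 : forall i, (i < 2)%N -> u`_(k.+2 - i) = 0.
      move=> i hi; rewrite -coef_rev; last by lia.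
      rewrite e2 mulrCA coefXnM hi //.
    apply/leq_sizeP => j hj.
    case: (ltnP j k.+3) => hj3; last by move/leq_sizeP: su; apply.
    have : (j = k.+1 \/ j = k.+2) by lia.
    case=> ->; [exact: (c0 1%N) | exact: (c0 0%N)].
  right; exists (a / b).
  have := congr1 ev1 e; rewrite ev1H // rmorphM rmorphXn rmorphB /= !evZ ev1X0 ev1X1 => ->.
  have -> : b *: 'X - a *: (1 : {poly K}) = b *: ('X - (a / b)%:P).
    by rewrite scalerBr !scale_polyC mulr1 [b * _]mulrC divfK.
  by rewrite exprZn -scalerAl dvdpZr ?expf_neq0 // dvdp_mulr.
- case=> [sk | [al hal]].
    exists (-1), 0; split.
      by rewrite xpair_eqE oppr_eq0 oner_eq0.
    exists (H k u).
    by rewrite H1 ?(leq_trans sk) // H1 // scale0r sub0r scaleN1r opprK expr2 mulrA.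
  case/dvdpP: hal => w ew.
  have sw : (size w <= k.+1)%N.
    case: (eqVneq w 0) => [->|w0]; first by rewrite size_poly0.
    move: su; rewrite ew size_mul ?expf_neq0 ?polyXsubC_eq0 //.
    have := size_exp ('X - al%:P) 2; rewrite size_XsubC /=.
    have : (0 < size (('X - al%:P) ^+ 2))%N by rewrite size_poly_gt0 expf_neq0 ?polyXsubC_eq0.
    move: (size _) (size w) => x y; lia.
  exists al, 1; split; first by rewrite xpair_eqE oner_eq0 andbF.
  exists (H k w).
  have eL : 'X - al%:P = 1 *: 'X + (- al)%:P by rewrite scale1r polyCN.
  have eL2 : (1 *: 'X_0 - al *: 'X_1 : {mpoly K[2]}) = 1 *: 'X_0 + (- al) *: 'X_1 by rewrite scaleNr.
  rewrite ew mulrC expr2 -mulrA eL HL; last first.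
    have := (HP 1%N 1 (-al) _ sw).2; by rewrite expr1.
  by rewrite HL // eL2 mulrA expr2.
Qed.
End Part6.
Arguments HPROD {R I}. Arguments ev1H {R k u}. Arguments hrr_iff {K k u}.
Section Part7.
Variable F : finFieldType.
Variables P Q : 'rV[F]_3.

Definition Lf (i : 'I_3) : {poly F} := P ord0 i *: 'X + (Q ord0 i)%:P.
Definition pc (f : {mpoly F[3]}) : {poly F} := mmap (@polyC F) Lf f.

Lemma pc_poly_of d (c : Rd F d) :
  pc (poly_of c) = \sum_(m : mon3 d) c m *: \prod_(i < 3) Lf i ^+ (val (val m)) i.
Proof.
rewrite /pc /poly_of raddf_sum /=; apply: eq_bigr => m _.
by rewrite mmapZ mul_polyC mmapX.
Qed.

Lemma mon3_deg d (m : mon3 d) : (\sum_(i <- index_enum 'I_3) (val (val m)) i)%N = d.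
Proof. by have := valP m; rewrite -mdegE => /eqP. Qed.

Lemma size_pc d (c : Rd F d) : (size (pc (poly_of c)) <= d.+1)%N.
Proof.
rewrite pc_poly_of; apply: (big_ind (fun p : {poly F} => size p <= d.+1)%N).
- by rewrite size_poly0.
- move=> x y hx hy; apply: leq_trans (size_polyD _ _) _; by rewrite geq_max hx hy.
move=> m _; apply: leq_trans (size_scale_leq _ _) _.
have := (HPROD (index_enum 'I_3) (fun i => P ord0 i) (fun i => Q ord0 i) (fun i => (val (val m)) i)).2.
by rewrite mon3_deg.
Qed.

Lemma restrict_H d (c : Rd F d) : restrict P Q (poly_of c) = H d (pc (poly_of c)).
Proof.
rewrite pc_poly_of linear_sum /restrict /poly_of raddf_sum /=.
apply: eq_bigr => m _; rewrite comp_mpolyZ comp_mpolyX linearZ /=; congr (_ *: _).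
have [h _] := HPROD (index_enum 'I_3) (fun i => P ord0 i) (fun i => Q ord0 i) (fun i => (val (val m)) i).
rewrite mon3_deg in h; rewrite h; apply: eq_bigr => i _.
by rewrite tnth_mktuple.
Qed.

Lemma H_map (K : fieldType) (f : {rmorphism F -> K}) k (u : {poly F}) :
  map_mpoly f (H k u) = H k (map_poly f u).
Proof.
rewrite /H rmorph_sum /=; apply: eq_bigr => j _.
by rewrite map_mpolyZ rmorphM !rmorphXn /= !map_mpolyX coef_map.
Qed.

Lemma H_eq0 k (u : {poly F}) : (size u <= k.+1)%N -> (H k u == 0) = (u == 0).
Proof.
move=> su; apply/eqP/eqP => [h|->]; last by rewrite linear0.
by rewrite -(ev1H su) h rmorph0.
Qed.

Lemma NT_iff k (c : Rd F k.+2) :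
  not_transverse P Q (poly_of c) <->
  ((size (pc (poly_of c)) <= k.+1)%N \/ NS (pc (poly_of c))).
Proof.
have sp := size_pc _ c.
rewrite /not_transverse restrict_H H_map.
have -> : (H k.+2 (pc (poly_of c)) = 0) <-> (pc (poly_of c) = 0).
  split => [h|->]; last by rewrite linear0.
  by rewrite -(ev1H sp) h rmorph0.
have := @hrr_iff (Fbar F) k (map_poly (toFbar F) (pc (poly_of c))).
rewrite size_map_poly => /(_ sp) hh.
rewrite /has_repeated_root hh /NS.
split.
- case=> [->|[]]; [left; by rewrite size_poly0 | by left | by right].
- case=> h; [by right; left | by right; right].
Qed.
End Part7.
Arguments pc {F}. Arguments Lf {F}. Arguments size_pc {F} P Q {d}. Arguments NT_iff {F} P Q {k}.
Section Part8.
Variable F : finFieldType.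
Variables P Q : 'rV[F]_3.

Lemma poly_of_homog d (f : {mpoly F[3]}) : f \is d.-homog -> exists c : Rd F d, poly_of c = f.
Proof.
move=> hf; exists [ffun m : mon3 d => f@_(val (val m))].
apply/mpolyP => k; rewrite /poly_of raddf_sum /=.
under eq_bigr do rewrite mcoeffZ mcoeffX ffunE.
case: (eqVneq (mdeg k) d) => hk.
  have hk' : (mdeg k < d.+1)%N by rewrite hk.
  pose mk : mon3 d := exist _ (BMultinom hk') (introT eqP hk).
  rewrite (bigD1 mk) //= eqxx mulr1 big1 ?addr0 // => m /negbTE nm.
  case: eqP => [e|]; rewrite ?mulr0 //.
  have emk : m = mk by apply: val_inj; apply: val_inj; exact: e.
  by move: nm; rewrite emk eqxx.
rewrite (dhomog_nemf_coeff hf hk) big1 // => m _.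
case: eqP => [e|]; rewrite ?mulr0 //.
by move: hk; rewrite -e; have := valP m => /eqP ->; rewrite eqxx.
Qed.

Lemma poly_ofD d (c1 c2 : Rd F d) : poly_of (c1 + c2) = poly_of c1 + poly_of c2.
Proof. by rewrite /poly_of -big_split; apply: eq_bigr => m _; rewrite ffunE scalerDl. Qed.

Definition phi {d} (c : Rd F d) : 'rV[F]_(d.+1) := poly_rV (pc P Q (poly_of c)).

Lemma phiD d (c1 c2 : Rd F d) : phi (c1 + c2) = phi c1 + phi c2.
Proof. by rewrite /phi poly_ofD /pc raddfD /= raddfD. Qed.

Lemma pcX (j : 'I_3) : pc P Q 'X_j = Lf P Q j.
Proof. by rewrite /pc mmapX mmap1U. Qed.

Lemma pc_lin (u : 'I_3 -> F) :
  pc P Q (\sum_(j < 3) u j *: 'X_j) =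
  (\sum_(j < 3) u j * P ord0 j) *: 'X + (\sum_(j < 3) u j * Q ord0 j)%:P.
Proof.
rewrite /pc raddf_sum /= rmorph_sum /= scaler_suml -big_split /=.
apply: eq_bigr => j _; rewrite mmapZ mul_polyC mmapX mmap1U /Lf.
by rewrite scalerDr scalerA scale_polyC.
Qed.

Lemma phi_surj d : row_free (col_mx P Q) -> forall w : 'rV[F]_(d.+1), exists c : Rd F d, phi c = w.
Proof.
case/row_freeP => B hB w.
pose U : {mpoly F[3]} := \sum_(j < 3) B j (lshift 1 (ord0 : 'I_1)) *: 'X_j.
pose V : {mpoly F[3]} := \sum_(j < 3) B j (rshift 1 (ord0 : 'I_1)) *: 'X_j.
have hU : U \is 1.-homog by apply: rpred_sum => j _; apply: rpredZ; apply/dhomogP => m; rewrite msuppX mem_seq1 => /eqP ->; exact: mdeg1.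
have hV : V \is 1.-homog by apply: rpred_sum => j _; apply: rpredZ; apply/dhomogP => m; rewrite msuppX mem_seq1 => /eqP ->; exact: mdeg1.
pose f : {mpoly F[3]} := \sum_(i < d.+1) w ord0 i *: (U ^+ i * V ^+ (d - i)).
have hf : f \is d.-homog.
  apply: rpred_sum => i _; apply: rpredZ.
  have := dhomogM (dhomogMn i hU) (dhomogMn (d - i) hV).
  by rewrite !mul1n subnKC // -ltnS.
have [c hc] := poly_of_homog _ _ hf.
exists c.
have e00 : \sum_(j < 3) B j (lshift 1 (ord0 : 'I_1)) * P ord0 j = 1.
  have := congr1 (fun M : 'M_(1 + 1) => M (lshift 1 (ord0 : 'I_1)) (lshift 1 (ord0 : 'I_1))) hB.
  by rewrite /= !mxE /= => h; rewrite -[X in _ = X]h; apply: eq_bigr => j _; rewrite col_mxEu mulrC.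
have e01 : \sum_(j < 3) B j (lshift 1 (ord0 : 'I_1)) * Q ord0 j = 0.
  have := congr1 (fun M : 'M_(1 + 1) => M (rshift 1 (ord0 : 'I_1)) (lshift 1 (ord0 : 'I_1))) hB.
  by rewrite /= !mxE /= => h; rewrite -[X in _ = X]h; apply: eq_bigr => j _; rewrite col_mxEd mulrC.
have e10 : \sum_(j < 3) B j (rshift 1 (ord0 : 'I_1)) * P ord0 j = 0.
  have := congr1 (fun M : 'M_(1 + 1) => M (lshift 1 (ord0 : 'I_1)) (rshift 1 (ord0 : 'I_1))) hB.
  by rewrite /= !mxE /= => h; rewrite -[X in _ = X]h; apply: eq_bigr => j _; rewrite col_mxEu mulrC.
have e11 : \sum_(j < 3) B j (rshift 1 (ord0 : 'I_1)) * Q ord0 j = 1.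
  have := congr1 (fun M : 'M_(1 + 1) => M (rshift 1 (ord0 : 'I_1)) (rshift 1 (ord0 : 'I_1))) hB.
  by rewrite /= !mxE /= => h; rewrite -[X in _ = X]h; apply: eq_bigr => j _; rewrite col_mxEd mulrC.
have pU : pc P Q U = 'X by rewrite /U pc_lin e00 e01 scale1r addr0.
have pV : pc P Q V = 1 by rewrite /V pc_lin e10 e11 scale0r add0r.
apply/rowP => j; rewrite /phi hc mxE /f /pc raddf_sum /= coef_sum.
rewrite (bigD1 j) //= big1 ?addr0.
  rewrite mmapZ mul_polyC rmorphM !rmorphXn /=.
  by rewrite -/(pc P Q U) -/(pc P Q V) pU pV expr1n mulr1 coefZ coefXn eqxx mulr1.
move=> i ij; rewrite mmapZ mul_polyC rmorphM !rmorphXn /=.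
rewrite -/(pc P Q U) -/(pc P Q V) pU pV expr1n mulr1 coefZ coefXn.
by rewrite eq_sym (inj_eq val_inj) (negbTE ij) mulr0.
Qed.
End Part8.
Arguments phi {F} P Q {d}. Arguments phi_surj {F} P Q {d}. Arguments phiD {F} P Q {d}.
Section Part9.
Variable F : finFieldType.
Variables P Q : 'rV[F]_3.
Hypothesis hL : row_free (col_mx P Q).

Lemma phiB d (x y : Rd F d) : phi P Q (x - y) = phi P Q x - phi P Q y.
Proof. by apply/eqP; rewrite eq_sym subr_eq -phiD subrK. Qed.

Lemma fiber_const d (w : 'rV[F]_(d.+1)) :
  #|[set c : Rd F d | phi P Q c == w]| = #|[set c : Rd F d | phi P Q c == 0]|.
Proof.
have [v0 hv0] := phi_surj P Q hL w.
rewrite -[RHS](card_imset _ (addIr v0)).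
apply: eq_card => c; rewrite inE; apply/eqP/imsetP.
  move=> hc; exists (c - v0); first by rewrite inE phiB hc hv0 subrr.
  by rewrite subrK.
by case=> x; rewrite inE => /eqP hx ->; rewrite phiD hx hv0 add0r.
Qed.

Lemma fiber_count d (B : {set 'rV[F]_(d.+1)}) :
  #|[set c : Rd F d | phi P Q c \in B]| = (#|B| * #|[set c : Rd F d | phi P Q c == 0%R]|)%N.
Proof.
rewrite -sum1_card.
rewrite (eq_bigl (fun c => phi P Q c \in B)); last by move=> c; rewrite inE.
rewrite (partition_big (phi P Q) (mem B)) //=.
rewrite -sum_nat_const; apply: eq_bigr => w wB.
rewrite -(fiber_const _ w) -sum1_card; apply: eq_bigl => c; rewrite inE.
by case: eqP => [->|]; rewrite ?wB ?andbF.
Qed.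

Lemma card_Rd d : #|{: Rd F d}| = (#|'rV[F]_(d.+1)| * #|[set c : Rd F d | phi P Q c == 0%R]|)%N.
Proof.
have := fiber_count d setT; rewrite cardsT => <-.
by apply: eq_card => c; rewrite !inE.
Qed.
End Part9.

Theorem lemma4p3 (F : finFieldType) (P Q : 'rV[F]_3) (hL : row_free (col_mx P Q)) :
  let q : rat := #|F|%:R in
  (forall d : nat, (3 <= d)%N -> mu_d P Q d = q^-1 + q^-2 - q^-3) /\
  rat_cvg (mu_d P Q) (q^-1 + q^-2 - q^-3).
Proof.
move=> q.
have main : forall d : nat, (3 <= d)%N -> mu_d P Q d = q^-1 + q^-2 - q^-3.
  case=> [|[|[|e]]] // _.
  set B := [set w : 'rV[F]_(e.+4) | (size (rVpoly w) <= e.+2)%N || pbool (NS (rVpoly w))].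
  have eS : [set c : Rd F e.+3 | pbool (not_transverse P Q (poly_of c))] =
            [set c : Rd F e.+3 | phi P Q c \in B].
    apply/setP => c; rewrite !inE /phi poly_rV_K ?size_pc //.
    apply/idP/idP.
      move/pboolP/(NT_iff P Q c) => [h|h]; apply/orP; [by left | by right; apply/pboolP].
    by case/orP => [h|/pboolP h]; apply/pboolP/(NT_iff P Q c); [left | right].
  rewrite /mu_d eS (fiber_count _ _ _ hL) (card_Rd _ _ _ hL) card_bad card_mx mul1n.
  have K0 : (0 < #|[set c : Rd F e.+3 | phi P Q c == 0%R]|)%N.
    apply/card_gt0P; exists 0; rewrite inE /phi.
    have -> : poly_of (0 : Rd F e.+3) = 0 by rewrite /poly_of big1 // => m _; rewrite ffunE scale0r.
    by rewrite /pc raddf0 linear0.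
  have q0 : (0 < #|F|)%N by apply/card_gt0P; exists 0.
  rewrite !natrM !natrD !natrM !natrB ?leq_pexp2l ?leqnSn // !natrX -/q.
  have qn0 : q != 0 by rewrite pnatr_eq0 -lt0n.
  set k := (#|_|%:R : rat).
  have kn0 : k != 0 by rewrite pnatr_eq0 -lt0n.
  rewrite !exprS; field.
  by rewrite kn0 qn0 expf_neq0.
split => // eps eps0; exists 3%N => d hd; rewrite main // subrr normr0 //.
Qed.
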